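(* Let $\mathcal{M}_1,\mathcal{M}_2$ be matroids on a finite ground set $E$, let $T$ be independent in both, let $p\in(0,1)$, and let $\Psi(e)$, $e\in T$, be i.i.d. with $\Pr[\Psi(e)=1]=1-p$; define $S=\{e\in T:\Psi(e)=1\}$. Let $i\in\{1,2\}$ and $\bar\imath$ the other index. Let $\tilde E\subseteq\mathrm{span}_i(T)$ and let $\tilde I\subseteq\tilde E$ be independent in $\mathcal{M}_i$ and in $\mathcal{M}_{\bar\imath}/T$. Then for any fixed arrival order of the elements of $\tilde E$, $$\mathbb{E}_\Psi\left[\left|\mathrm{Greedy}(\mathcal{M}_i/S,\ \mathcal{M}_{\bar\imath}/T,\ \tilde E)\right|\right]\ge\frac{1}{1+p}\,p\,|\tilde I|.$$
   Context: $\mathrm{span}_i(T)=\{e\in E:\mathrm{rank}_{\mathcal{M}_i}(T\cup\{e\})=\mathrm{rank}_{\mathcal{M}_i}(T)\}$. For a matroid $\mathcal{M}$ and an independent set $X$, the contraction $\mathcal{M}/X$ has independent sets exactly those $A$ with $A\cap X=\emptyset$ and $A\cup X$ independent in $\mathcal{M}$. $\mathrm{Greedy}(\mathcal{N}_1,\mathcal{N}_2,\tilde E)$ processes the elements of $\tilde E$ in the given order, starting from the empty set, and adds an element whenever the current set together with it is independent in both $\mathcal{N}_1$ and $\mathcal{N}_2$; it returns the resulting set. *)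

(* Defs.v *)
From HB Require Import structures.
From mathcomp Require Import all_boot all_order all_algebra.
Set Implicit Arguments. Unset Strict Implicit. Unset Printing Implicit Defensive.
Import Order.TTheory GRing.Theory Num.Theory.

Record matroid (E : finType) := Matroid {
  indep :> {set E} -> bool;
  indep0 : indep set0;
  indep_sub : forall A B : {set E}, A \subset B -> indep B -> indep A;
  indep_exch : forall A B : {set E}, indep A -> indep B -> #|A| < #|B| ->
    exists2 x, x \in B :\: A & indep (x |: A)
}.

Section MatroidDefs.
Variable E : finType.
Implicit Types (M : matroid E) (X A : {set E}).

Definition mrank M X : nat :=
  \max_(A : {set E} | (A \subset X) && M A) #|A|.

Definition mspan M X : {set E} :=
  [set e | mrank M (e |: X) == mrank M X].

(* independent sets of the contraction M / X (X independent in M) *)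
Definition contract M X : pred {set E} :=
  fun A => [disjoint A & X] && M (A :|: X).

Definition greedy (N1 N2 : pred {set E}) (s : seq E) : {set E} :=
  foldl (fun G e => if N1 (e |: G) && N2 (e |: G) then e |: G else G) set0 s.

(* E_Psi[f(S)] where S = {e in T : Psi e = 1}, Psi(e) i.i.d. with
   Pr[Psi e = 1] = 1 - p : each S subset of T has probability
   (1-p)^|S| p^|T\S|. *)
Definition expect_sub (R : numDomainType) (p : R) (T : {set E})
    (f : {set E} -> R) : R :=
  \sum_(S in powerset T) ((1 - p) ^+ #|S| * p ^+ #|T :\: S|) * f S.

End MatroidDefs.

(* Main.v *)
Require Import Defs.
From HB Require Import structures.
From mathcomp Require Import all_boot all_order all_algebra.
From mathcomp Require Import zify ring lra.
Import Order.TTheory GRing.Theory Num.Theory.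
Set Implicit Arguments. Unset Strict Implicit. Unset Printing Implicit Defensive.


Lemma exch_le (E : finType) (M : matroid E) (X A : {set E}) :
  M X -> M A -> (forall x, x \in X -> (x \in A) || ~~ M (x |: A)) ->
  #|X| <= #|A|.
Proof.
move=> MX MA H; rewrite leqNgt; apply/negP=> lt.
have [x /setDP [xX xA] Mx] := indep_exch MA MX lt.
by move: (H x xX); rewrite (negbTE xA) Mx.
Qed.

Lemma maxext (E : finType) (M : matroid E) (X U : {set E}) :
  M X -> X \subset U -> exists B : {set E}, [/\ X \subset B, B \subset U, M B &
    forall u, u \in U -> u \notin B -> ~~ M (u |: B)].
Proof.
move=> MX XU.
pose P n := [exists B : {set E}, [&& X \subset B, B \subset U, M B & #|B| == n]].
have exP : exists n, P n by exists #|X|; apply/existsP; exists X; rewrite subxx XU MX eqxx.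
have ubP : forall n, P n -> n <= #|U|.
  by move=> n /existsP [B /and4P [_ BU _ /eqP <-]]; apply: subset_leq_card.
case: (ex_maxnP exP ubP) => n /existsP [B /and4P [XB BU MB /eqP cB]] mx.
exists B; split=> // u uU uB; apply/negP=> Mu.
have : P n.+1.
  apply/existsP; exists (u |: B); rewrite Mu (subset_trans XB) ?subsetUr //=.
  by rewrite subUset sub1set uU BU cardsU1 uB cB add1n /=.
by move/mx; rewrite ltnn.
Qed.

Lemma cl_trans (E : finType) (M : matroid E) (X A : {set E}) (t : E) :
  M X -> M (t |: A) -> t \notin A ->
  (forall x, x \in X -> (x \in A) || ~~ M (x |: A)) -> M (t |: X).
Proof.
move=> MX MtA tA H; apply/negP=> nMtX.
have MA : M A by apply: indep_sub MtA; apply: subsetUr.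
have [B [XB BU MB Bmax]] := maxext MX (subsetUl X A).
have lB : #|B| <= #|A|.
  apply: (exch_le MB MA) => b bB.
  move: (subsetP BU b bB); rewrite in_setU => /orP [/H //|-> //].
have lt : #|B| < #|t |: A| by rewrite cardsU1 tA.
have [x /setDP [xtA xB] Mx] := indep_exch MB MtA lt.
move: xtA; rewrite in_setU1 => /orP [/eqP xt|xA].
  subst x; apply: nMtX; apply: indep_sub Mx; exact: setUS.
by move: (Bmax x); rewrite in_setU xA orbT xB Mx => /(_ isT isT).
Qed.

Definition gstep (E : finType) (N1 N2 : pred {set E}) (G : {set E}) (e : E) :=
  if N1 (e |: G) && N2 (e |: G) then e |: G else G.

Lemma greedyE (E : finType) (N1 N2 : pred {set E}) s :
  greedy N1 N2 s = foldl (gstep N1 N2) set0 s.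
Proof. by []. Qed.

Lemma g_mono (E : finType) (N1 N2 : pred {set E}) (s : seq E) (H : {set E}) :
  H \subset foldl (gstep N1 N2) H s.
Proof.
elim: s H => [|e s IH] H /=; first exact: subxx.
apply: subset_trans (IH _); rewrite /gstep; case: ifP => _ //; exact: subsetUr.
Qed.

Lemma g_inv (E : finType) (N1 N2 : pred {set E}) (s : seq E) (H : {set E}) :
  N1 H && N2 H -> N1 (foldl (gstep N1 N2) H s) && N2 (foldl (gstep N1 N2) H s).
Proof.
elim: s H => [|e s IH] H //= h; apply: IH; rewrite /gstep; by case: ifP.
Qed.

Lemma g_max (E : finType) (N1 N2 : pred {set E}) (s : seq E) (H : {set E}) (e : E) :
  e \in s -> e \in foldl (gstep N1 N2) H s \/
    exists H' : {set E}, H' \subset foldl (gstep N1 N2) H s /\ ~~ (N1 (e |: H') && N2 (e |: H')).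
Proof.
elim: s H => [|a s IH] H //=; rewrite in_cons => /orP [/eqP ->|es]; last exact: IH.
case h: (N1 (a |: H) && N2 (a |: H)).
  have -> : gstep N1 N2 H a = a |: H by rewrite /gstep h.
  by left; apply: (subsetP (g_mono _ _ _ _)); rewrite setU11.
have -> : gstep N1 N2 H a = H by rewrite /gstep h.
right; exists H; split; first exact: g_mono.
by rewrite h.
Qed.

Lemma g_eq (E : finType) (N1 N1' N2 : pred {set E}) (s : seq E) (H : {set E}) :
  (forall X : {set E}, N1' X -> N1 X) ->
  (forall X : {set E}, X \subset foldl (gstep N1 N2) H s -> N1 X -> N1' X) ->
  foldl (gstep N1' N2) H s = foldl (gstep N1 N2) H s.
Proof.
elim: s H => [|e s IH] H //= h1 h2.
have -> : gstep N1' N2 H e = gstep N1 N2 H e.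
  rewrite /gstep; case h: (N1 (e |: H) && N2 (e |: H)).
    case/andP: h => a b; rewrite b andbT h2 //.
    by have := g_mono N1 N2 s (gstep N1 N2 H e); rewrite /gstep a b.
  case h': (N1' (e |: H) && N2 (e |: H)) => //.
  by case/andP: h' => /h1 a b; rewrite a b in h.
by apply: IH.
Qed.

Lemma disjP' (E : finType) (A B : {set E}) :
  reflect (forall x, x \in A -> x \notin B) [disjoint A & B].
Proof.
rewrite -setI_eq0; apply: (iffP eqP) => [h x xA|h].
  apply/negP => xB; have: x \in A :&: B by rewrite inE xA xB.
  by rewrite h inE.
apply/setP => x; rewrite !inE; case xA: (x \in A) => //=.
exact: negbTE (h x xA).
Qed.

Lemma card_disjU (E : finType) (A B : {set E}) :
  [disjoint A & B] -> #|A :|: B| = #|A| + #|B|.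
Proof. by move=> h; rewrite cardsU (disjoint_setI0 h) cards0 subn0. Qed.

Lemma contract_sub (E : finType) (M : matroid E) (X A B : {set E}) :
  A \subset B -> contract M X B -> contract M X A.
Proof.
move=> AB /andP [/disjP' d MB]; apply/andP; split.
  by apply/disjP' => x xA; apply: d; apply: (subsetP AB).
by apply: indep_sub MB; apply: setSU.
Qed.
Local Open Scope ring_scope.

Definition tog (E : finType) (t : E) (S : {set E}) :=
  if t \in S then S :\ t else t |: S.

Lemma togK (E : finType) (t : E) : involutive (tog t).
Proof.
move=> S; case tS: (t \in S).
  by rewrite /tog tS setD11 setD1K.
by rewrite /tog tS setU11 setU1K ?tS.
Qed.

Lemma sum_split (E : finType) (V : nmodType) (T : {set E}) (t : E)
    (F : {set E} -> V) : t \in T ->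
  \sum_(S in powerset T) F S =
  \sum_(S in powerset (T :\ t)) (F S + F (t |: S)).
Proof.
move=> tT; rewrite (bigID (fun S : {set E} => t \in S)) big_split /= addrC.
congr (_ + _).
  by apply: eq_bigl => S; rewrite !powersetE subsetD1.
rewrite (reindex_inj (can_inj (togK t))) /=.
apply: eq_big => S.
  rewrite /tog !powersetE; case: ifP => tS.
    by rewrite setD11 andbF subsetD1 tS andbF.
  by rewrite setU11 andbT subsetD1 tS andbT subUset sub1set tT.
by rewrite /tog; case: ifP => tS //; rewrite setD11 andbF.
Qed.

Definition wt (R : comRingType) (E : finType) (p : R) (T S : {set E}) :=
  (1 - p) ^+ #|S| * p ^+ #|T :\: S|.

Lemma cardD_split (E : finType) (T S : {set E}) (t : E) :
  t \in T -> S \subset T :\ t ->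
  #|T :\: S| = (#|(T :\ t) :\: S|).+1 /\ T :\: (t |: S) = (T :\ t) :\: S
  /\ #|t |: S| = (#|S|).+1.
Proof.
move=> tT; rewrite subsetD1 => /andP [ST tS].
split; last split.
- rewrite (cardsD1 t) in_setD tS tT /= add1n; congr (_.+1).
  by apply: eq_card => x; rewrite !inE andbCA.
- by apply/setP => x; rewrite !inE negb_or andbA [_ && (x != t)]andbC.
- by rewrite cardsU1 tS add1n.
Qed.

Lemma wt_split (R : comRingType) (E : finType) (p : R) (T S : {set E}) (t : E) :
  t \in T -> S \subset T :\ t ->
  wt p T S = wt p (T :\ t) S * p /\ wt p T (t |: S) = wt p (T :\ t) S * (1 - p).
Proof.
move=> tT St; have [h1 [h2 h3]] := cardD_split tT St.
rewrite /wt h1 h2 h3 !exprS; split; ring.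
Qed.

Lemma wt_sum (R : comRingType) (E : finType) (p : R) (T : {set E}) :
  \sum_(S in powerset T) wt p T S = 1.
Proof.
move: {2}#|T| (erefl #|T|) => n; elim: n T => [|n IH] T cT.
  move/eqP: cT; rewrite cards_eq0 => /eqP ->.
  by rewrite powerset0 big_set1 /wt cards0 setD0 cards0 !expr0 mulr1.
have [t tT] : exists t, t \in T.
  by apply/set0Pn; rewrite -card_gt0 cT.
rewrite (sum_split _ tT) -(IH (T :\ t)); last by rewrite (cardsD1 t) tT in cT; lia.
apply: eq_big => // S; rewrite powersetE => St.
have [-> ->] := wt_split p tT St; ring.
Qed.

Theorem lemma8 (R : realFieldType) (E : finType) (Mi Mb : matroid E)
    (T : {set E}) (p : R) (Et It : {set E}) (order : seq E) :
  Mi T -> Mb T -> 0 < p < 1 ->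
  Et \subset mspan Mi T ->
  It \subset Et -> Mi It -> contract Mb T It ->
  uniq order -> (forall e, (e \in order) = (e \in Et)) ->
  expect_sub p T (fun S => (#|greedy (contract Mi S) (contract Mb T) order|)%:R)
    >= 1 / (1 + p) * p * (#|It|)%:R.
Proof.
move=> MiT MbT /andP [p0 p1] _ ItEt MiI /andP [/disjP' dIT MbIT] _ ordE.
pose G S := greedy (contract Mi S) (contract Mb T) order.
pose Y S := [set y in It | (y \notin G S) && contract Mb T (y |: G S)].
have FG : forall S : {set E}, S \subset T ->
    [/\ [disjoint G S & S], Mi (G S :|: S), [disjoint G S & T] & Mb (G S :|: T)].
  move=> S ST.
  have : contract Mi S (G S) && contract Mb T (G S).
    rewrite /G greedyE; apply: g_inv.
    rewrite /contract !set0U MbT (indep_sub ST MiT) andbT andbT.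
    by apply/andP; split; apply/disjP' => x; rewrite inE.
  by case/andP => /andP [a b] /andP [c d].
have YI : forall S : {set E}, Y S \subset It by move=> S; apply/subsetP => y; rewrite inE => /andP [].
have YT : forall (S : {set E}) y, y \in Y S -> y \notin T by move=> S y /(subsetP (YI S)) /dIT.
have Ycl : forall S : {set E}, S \subset T -> forall y, y \in Y S -> ~~ Mi (y |: (G S :|: S)).
  move=> S ST y yY; have := yY; rewrite inE => /and3P [yI yG N2y].
  have := @g_max E (contract Mi S) (contract Mb T) order set0 y.
  rewrite ordE (subsetP ItEt y yI) -greedyE -/(G S) => /(_ isT) [yG'|[H' [H'G nH]]].
    by rewrite yG' in yG.
  have N2H : contract Mb T (y |: H') by apply: contract_sub N2y; apply: setUS.
  rewrite N2H andbT in nH.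
  apply/negP => My; move/negP: nH; apply; apply: (contract_sub (setUS [set y] H'G)).
  apply/andP; split; last by rewrite -setUA.
  have [d _ _ _] := FG S ST.
  apply/disjP' => x; rewrite in_setU1 => /orP [/eqP ->|xG].
    by apply/negP => yS; move: (YT _ _ yY); rewrite (subsetP ST y yS).
  exact: (disjP' _ _ d).
have FA : forall S : {set E}, S \subset T -> (#|It| <= #|G S| + #|Y S|)%N.
  move=> S ST; have [_ _ dGT MbGT] := FG S ST.
  rewrite -(cardsID (Y S) It) (setIidPr (YI S)) addnC leq_add2r.
  have dD : [disjoint It :\: Y S & T].
    by apply/disjP' => x; rewrite inE => /andP [_ /dIT].
  have dG : [disjoint G S & T] by [].
  rewrite -(leq_add2r #|T|) -!card_disjU //.
  apply: (exch_le (M:=Mb) (X := (It :\: Y S) :|: T) (A := G S :|: T)) => //.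
    apply: indep_sub MbIT; apply: setSU; exact: subsetDl.
  move=> x; rewrite !inE => /orP [/andP [xY xI]|xT]; last by rewrite xT orbT.
  move: xY; rewrite xI /= negb_and negbK => /orP [xG|nN]; first by rewrite xG.
  apply/orP; right; apply: contra nN => Mx; apply/andP; split; last by rewrite -setUA.
  apply/disjP' => z; rewrite in_setU1 => /orP [/eqP ->|zG]; first exact: dIT.
  exact: (disjP' _ _ dG).
have MY : forall S : {set E}, Mi (Y S) by move=> S; exact: indep_sub (YI S) MiI.
pose Bc S := odflt (Y S) [pick B : {set E} | [&& Y S \subset B, B \subset Y S :|: S, Mi B &
   [forall u, (u \in Y S :|: S) ==> (u \in B) || ~~ Mi (u |: B)]]].
have BcP : forall S : {set E}, [/\ Y S \subset Bc S, Bc S \subset Y S :|: S, Mi (Bc S) &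
    forall u, u \in Y S :|: S -> u \notin Bc S -> ~~ Mi (u |: Bc S)].
  move=> S; rewrite /Bc; case: pickP => [B /and4P [a b c /forallP d]|none] /=.
    by split=> // u uU uB; move: (d u); rewrite uU (negbTE uB).
  have [B [a b c d]] := maxext (MY S) (subsetUl (Y S) S).
  move: (none B); rewrite a b c /=; suff -> : [forall u, (u \in Y S :|: S) ==> (u \in B) || ~~ Mi (u |: B)] by [].
  apply/forallP => u; apply/implyP => uU; case: (boolP (u \in B)) => //= uB; exact: d.
pose Q S := S :\: Bc S.
have FB : forall S : {set E}, S \subset T -> (#|Y S| <= #|G S| + #|Q S|)%N.
  move=> S ST; have [dGS MGS _ _] := FG S ST; have [YB BU MB _] := BcP S.
  have l1 : (#|Bc S| <= #|G S :|: S|)%N.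
    apply: (exch_le MB MGS) => b bB; move: (subsetP BU b bB); rewrite in_setU.
    by case/orP => [/(Ycl S ST) ->|bS]; rewrite ?orbT // in_setU bS orbT.
  rewrite card_disjU // in l1.
  have dYS : [disjoint Y S & S :&: Bc S].
    apply/disjP' => x /(YT S) xT; rewrite inE negb_and; apply/orP; left.
    by apply: contra xT; apply: (subsetP ST).
  have l2 : (#|Y S :|: (S :&: Bc S)| <= #|Bc S|)%N.
    by apply: subset_leq_card; rewrite subUset YB subsetIr.
  rewrite card_disjU // in l2.
  have l3 := cardsID (Bc S) S.
  by have := leq_trans l2 l1; rewrite -l3 addnCA [(#|Y S| + _)%N]addnC leq_add2l.
have Geq : forall (S' : {set E}) x, S' \subset T -> x \in T -> x \notin S' ->
    Mi (x |: (G S' :|: S')) -> G (x |: S') = G S'.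
  move=> S' x ST xT xS Mx; have [dGS _ dGT _] := FG S' ST.
  rewrite /G !greedyE; apply: g_eq => X.
    move=> /andP [/disjP' d MX]; apply/andP; split.
      by apply/disjP' => z zX; move: (d z zX); rewrite in_setU1 negb_or => /andP [].
    by apply: indep_sub MX; apply: setUS; apply: subsetUr.
  rewrite -greedyE -/(G S') => XG /andP [/disjP' d MX]; apply/andP; split.
    apply/disjP' => z zX; rewrite in_setU1 negb_or (d z zX) andbT.
    apply/negP => /eqP zx; subst z; move: (disjP' _ _ dGT x (subsetP XG x zX)).
    by rewrite xT.
  apply: indep_sub Mx; rewrite setUCA; apply: setUS; exact: setSU.
pose Z S := [set t in T :\: S | t \in Q (t |: S)].
have FZ : forall S : {set E}, S \subset T -> (#|Z S| <= #|G S|)%N.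
  move=> S ST; have [dGS MGS dGT _] := FG S ST.
  have dZ : [disjoint Z S & S] by apply/disjP' => x; rewrite !inE => /andP [/andP [] ].
  rewrite -(leq_add2r #|S|) -!card_disjU //.
  apply: (exch_le (M:=Mi)).
    apply: indep_sub MiT; rewrite subUset ST andbT.
    by apply/subsetP => x; rewrite !inE => /andP [/andP []].
    exact: MGS.
  move=> x; rewrite in_setU => /orP [xZ|xS]; last by rewrite in_setU xS orbT.
  move: xZ; rewrite !inE => /andP [/andP [xS xT] xQ].
  have xG : x \notin G S by apply/negP => /(disjP' _ _ dGT); rewrite xT.
  rewrite (negbTE xS) (negbTE xG) /=; apply/negP => Mx.
  have eG := Geq S x ST xT xS Mx.
  have eY : Y (x |: S) = Y S by rewrite /Y eG.
  have [YB BU MB Bmax] := BcP (x |: S).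
  move: xQ => /andP [xB _].
  have : ~~ Mi (x |: Bc (x |: S)).
    by apply: Bmax xB; rewrite in_setU setU11 orbT.
  apply/negP/negPn; apply: (cl_trans MB Mx).
    by rewrite in_setU negb_or xG.
  move=> b bB; move: (subsetP BU b bB); rewrite eY in_setU in_setU1.
  case/or3P => [/(Ycl S ST) ->|/eqP bx|bS]; rewrite ?orbT //.
    by subst b; rewrite bB in xB.
  by rewrite in_setU bS orbT.
have wge : forall S, 0 <= wt p T S.
  by move=> S; apply: mulr_ge0; apply: exprn_ge0; lra.
have cardR : forall A : {set E}, A \subset T ->
    (#|A|)%:R = \sum_(t in T) ((t \in A)%:R : R).
  move=> A AT.
  rewrite (eq_bigr (fun t => if t \in A then 1 else 0)); last by move=> t _; case: (t \in A).
  rewrite -big_mkcondr /= (eq_bigl (fun t => t \in A)); first by rewrite sumr_const.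
  by move=> t /=; case tA: (t \in A); rewrite ?andbF // andbT (subsetP AT).
pose Eg := \sum_(S in powerset T) wt p T S * (#|G S|)%:R.
pose Ey := \sum_(S in powerset T) wt p T S * (#|Y S|)%:R.
pose Eq := \sum_(S in powerset T) wt p T S * (#|Q S|)%:R.
pose Ez := \sum_(S in powerset T) wt p T S * (#|Z S|)%:R.
have h1 : (#|It|)%:R <= Eg + Ey.
  have -> : (#|It|)%:R = \sum_(S in powerset T) wt p T S * (#|It|)%:R :> R.
    by rewrite -mulr_suml wt_sum mul1r.
  rewrite -big_split /=.
  apply: ler_sum => S; rewrite powersetE => ST; rewrite -mulrDr -natrD.
  apply: ler_wpM2l; first exact: wge.
  by rewrite ler_nat; exact: FA.
have h2 : Ey <= Eg + Eq.
  rewrite -big_split /=.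
  apply: ler_sum => S; rewrite powersetE => ST; rewrite -mulrDr -natrD.
  apply: ler_wpM2l; first exact: wge.
  by rewrite ler_nat; exact: FB.
have h4 : Ez <= Eg.
  apply: ler_sum => S; rewrite powersetE => ST.
  apply: ler_wpM2l; first exact: wge.
  by rewrite ler_nat; exact: FZ.
have h3 : p * Eq = (1 - p) * Ez.
  have eQ : Eq = \sum_(t in T) \sum_(S in powerset T) wt p T S * (t \in Q S)%:R.
    rewrite exchange_big; apply: eq_bigr => S; rewrite powersetE => ST.
    by rewrite (cardR (Q S)) ?mulr_sumr // (subset_trans _ ST) // subsetDl.
  have eZ : Ez = \sum_(t in T) \sum_(S in powerset T) wt p T S * (t \in Z S)%:R.
    rewrite exchange_big; apply: eq_bigr => S; rewrite powersetE => ST.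
    rewrite (cardR (Z S)) ?mulr_sumr //.
    by apply/subsetP => x; rewrite !inE => /andP [/andP []].
  rewrite eQ eZ !mulr_sumr; apply: eq_bigr => t tT.
  rewrite !(sum_split _ tT) !mulr_sumr; apply: eq_bigr => S; rewrite powersetE => St.
  have [w1 w2] := wt_split p tT St.
  have tS : t \notin S by move: St; rewrite subsetD1 => /andP [].
  have q1 : (t \in Q S) = false by rewrite /Q inE (negbTE tS) andbF.
  have z1 : (t \in Z S) = (t \in Q (t |: S)) by rewrite /Z inE in_setD tT tS.
  have z2 : (t \in Z (t |: S)) = false by rewrite /Z !inE eqxx.
  rewrite w1 w2 q1 z1 z2 /=; ring.
have key : p * (#|It|)%:R <= (1 + p) * Eg.
  have a := ler_wpM2l (ltW p0) h1.
  have b := ler_wpM2l (ltW p0) h2.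
  have c : (1 - p) * Ez <= (1 - p) * Eg by apply: ler_wpM2l => //; lra.
  nra.
change (1 / (1 + p) * p * (#|It|)%:R <= Eg).
rewrite mul1r -mulrA ler_pdivrMl //; lra.
Qed.
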